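(* Let $0<\mu\le L$ and $\frac{25\mu}{(12L-\mu)^2}\le s\le\frac{1}{4L}$. For $\beta\in[0,1]$ define $$A_\beta=\frac{1}{(1-\sqrt{\mu s})^2}\left[1-2Ls\cdot\frac{(\beta-\beta^2)\mu s+(3+\beta^2-2\beta)\sqrt{\mu s}+2-2\beta}{2\sqrt{\mu s}}\right],\qquad B_\beta=\frac{1}{1-\sqrt{\mu s}}+\frac{\beta^2Ls}{2}.$$ Then there exists $\beta_c\in[0,1]$, depending on $\mu,s,L$, such that $\frac{A_\beta}{B_\beta}\le\frac16$ for $0\le\beta\le\beta_c$ and $\frac{A_\beta}{B_\beta}>\frac16$ for $\beta_c<\beta\le1$. *)

(* Defs.v *)
From Stdlib Require Import Reals.
Open Scope R_scope.

Definition A_beta (mu L s beta : R) : R :=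
  / (1 - sqrt (mu * s)) ^ 2 *
  (1 - 2 * L * s *
       (((beta - beta ^ 2) * mu * s + (3 + beta ^ 2 - 2 * beta) * sqrt (mu * s)
         + 2 - 2 * beta) / (2 * sqrt (mu * s)))).

Definition B_beta (mu L s beta : R) : R :=
  / (1 - sqrt (mu * s)) + beta ^ 2 * L * s / 2.

(* Main.v *)
Require Import Defs.
From Stdlib Require Import Reals Lra Psatz.
Open Scope R_scope.

Definition Nf (t b : R) : R :=
  (b - b ^ 2) * t ^ 2 + (3 + b ^ 2 - 2 * b) * t + 2 - 2 * b.

Definition G (t x b : R) : R :=
  6 / (1 - t) ^ 2 - 6 * x * Nf t b / (t * (1 - t) ^ 2) - 1 / (1 - t) - b ^ 2 * x / 2.

Lemma G_incr t x b1 b2 : 0 < t <= 1/2 -> 0 < x -> 0 <= b1 -> b1 < b2 -> b2 <= 1 ->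
  G t x b1 < G t x b2.
Proof.
  intros Ht Hx H1 H12 H2.
  set (K := 2 + 2*t - t^2 - (b1+b2)*(t - t^2)).
  set (q := 6 * K / (t * (1-t)^2)).
  assert (Hd : 0 < t * (1-t)^2) by (apply Rmult_lt_0_compat; [lra| apply pow_lt; lra]).
  assert (HG : G t x b2 - G t x b1 = (b2 - b1) * x * (q - (b1+b2)/2)).
  { unfold G, q, K, Nf. field. split; lra. }
  assert (HK : K >= 2) by (unfold K; nra).
  assert (Hq : q * (t * (1-t)^2) = 6 * K) by (unfold q; field; lra).
  assert (Hd2 : t * (1-t)^2 <= 1/2) by nra.
  assert (q >= 24) by nra.
  assert (0 < (b2 - b1) * x * (q - (b1+b2)/2)).
  { apply Rmult_lt_0_compat; [apply Rmult_lt_0_compat|]; lra. }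
  lra.
Qed.

Lemma G_cont t x : continuity (G t x).
Proof.
  unfold G, Nf.
  set (c1 := 6 / (1 - t) ^ 2). set (c2 := 6 * x). set (c3 := /(t * (1 - t) ^ 2)).
  set (c4 := 1 / (1 - t)).
  assert (E : (fun b => c1 - c2 * ((b - b ^ 2) * t ^ 2 + (3 + b ^ 2 - 2 * b) * t + 2 - 2 * b) / (t * (1 - t) ^ 2) - c4 - b ^ 2 * x / 2)
     = (fun b => c1 - c2 * ((b - b ^ 2) * t ^ 2 + (3 + b ^ 2 - 2 * b) * t + 2 - 2 * b) * c3 - c4 - b ^ 2 * x * /2)).
  { reflexivity. }
  rewrite E. reg.
Qed.

Theorem lemma5p6 (mu L s : R) :
  0 < mu -> mu <= L ->
  25 * mu / (12 * L - mu) ^ 2 <= s -> s <= 1 / (4 * L) ->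
  exists beta_c : R, 0 <= beta_c <= 1 /\
    (forall beta, 0 <= beta <= beta_c ->
       A_beta mu L s beta / B_beta mu L s beta <= 1 / 6) /\
    (forall beta, beta_c < beta <= 1 ->
       A_beta mu L s beta / B_beta mu L s beta > 1 / 6).
Proof.
  intros Hmu HmL Hs1 Hs2.
  assert (HL : 0 < L) by lra.
  assert (Hc : 0 < 12 * L - mu) by lra.
  assert (Hc2 : 0 < (12 * L - mu) ^ 2) by (apply pow_lt; lra).
  assert (Hs0 : 0 < s).
  { eapply Rlt_le_trans; [|exact Hs1]. unfold Rdiv. apply Rmult_lt_0_compat; [lra|].
    apply Rinv_0_lt_compat; lra. }
  assert (Hlow : s * (12 * L - mu) ^ 2 >= 25 * mu).
  { apply Rle_ge. apply (Rmult_le_compat_r ((12 * L - mu) ^ 2)) in Hs1; [|lra].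
    unfold Rdiv in Hs1. rewrite Rmult_assoc, Rinv_l in Hs1; lra. }
  assert (Hx : L * s <= 1/4).
  { apply (Rmult_le_compat_l (4*L)) in Hs2; [|lra].
    unfold Rdiv in Hs2. rewrite Rmult_1_l, Rinv_r in Hs2; lra. }
  set (x := L * s) in *.
  set (t := sqrt (mu * s)).
  assert (Hms : 0 < mu * s) by nra.
  assert (Ht2 : t * t = mu * s) by (apply sqrt_sqrt; lra).
  assert (Ht0 : 0 < t) by (apply sqrt_lt_R0; lra).
  assert (Htx : mu * s <= x) by (unfold x; nra).
  assert (Ht : t <= 1/2) by nra.
  assert (Hlow2 : 12 * x - t * t >= 5 * t).
  { assert (E : s * (12 * L - mu) = 12 * x - t * t) by (unfold x; nra).
    assert (E2 : (s * (12 * L - mu)) ^ 2 >= 25 * (t * t)) by nra.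
    rewrite E in E2. nra. }
  assert (HA : forall b, 6 * A_beta mu L s b - B_beta mu L s b = G t x b).
  { intro b. unfold A_beta, B_beta, G, Nf. fold t. fold x.
    replace ((b - b ^ 2) * mu * s) with ((b - b ^ 2) * t ^ 2) by (rewrite Rmult_assoc, <- Ht2; ring).
    unfold x; clearbody t; field. split; lra. }
  assert (HB : forall b, 0 < B_beta mu L s b).
  { intro b. unfold B_beta. fold t. fold x.
    assert (0 < / (1 - t)) by (apply Rinv_0_lt_compat; lra).
    assert (0 <= b ^ 2 * x / 2). { assert (0 <= b^2) by apply pow2_ge_0. assert (0 < x) by (unfold x; nra). unfold Rdiv. apply Rmult_le_pos; [apply Rmult_le_pos|]; lra. } replace (b ^ 2 * L * s / 2) with (b ^ 2 * x / 2) by (unfold x; rewrite (Rmult_assoc (b ^ 2) L s); reflexivity). lra. }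
  assert (Heq : forall b, A_beta mu L s b / B_beta mu L s b <= 1/6 <-> G t x b <= 0).
  { intro b. rewrite <- HA. specialize (HB b). split; intro H.
    - apply (Rmult_le_compat_r (B_beta mu L s b)) in H; [|lra].
      unfold Rdiv in H. rewrite Rmult_assoc, Rinv_l in H; lra.
    - unfold Rdiv. apply (Rmult_le_reg_r (B_beta mu L s b)); [lra|].
      rewrite Rmult_assoc, Rinv_l; lra. }
  assert (Hg0 : G t x 0 <= 0).
  { assert (E : G t x 0 = (6*t - 6*x*(3*t+2) - t*(1-t)) / (t * (1-t)^2)).
    { unfold G, Nf. field. split; lra. }
    rewrite E. unfold Rdiv.
    assert (0 < / (t * (1-t)^2)) by (apply Rinv_0_lt_compat; apply Rmult_lt_0_compat; [lra| apply pow_lt; lra]).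
    assert (6*t - 6*x*(3*t+2) - t*(1-t) <= 0).
    { assert (0 < x) by (unfold x; nra). nra. }
    nra. }
  assert (Hmono : forall b1 b2, 0 <= b1 -> b1 < b2 -> b2 <= 1 -> G t x b1 < G t x b2).
  { intros; apply G_incr; lra. }
  destruct (Rle_dec (G t x 1) 0) as [H1|H1].
  - exists 1. split; [lra|]. split.
    + intros b Hb. apply Heq. destruct (Req_dec b 1) as [->|Hne]; [lra|].
      left. apply Rlt_le_trans with (G t x 1); [apply Hmono; lra|lra].
    + intros b Hb; lra.
  - destruct (IVT_cor (G t x) 0 1 (G_cont t x)) as [z [Hz Gz]]; [lra| nra |].
    exists z. split; [lra|]. split.
    + intros b Hb. apply Heq. destruct (Req_dec b z) as [->|Hne]; [lra|].
      left. rewrite <- Gz. apply Hmono; lra.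
    + intros b Hb. apply Rnot_le_lt. intro H. apply Heq in H.
      assert (G t x z < G t x b) by (apply Hmono; lra). lra.
Qed.
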